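(* Let $A_1,\dots,A_{12}$ be the vertices of a regular icosahedron in $\mathbb R^3$ with centre $O$, and let $\Gamma$ be a sphere centred at $O$. If $\lambda\in\mathbb R$ is such that $M\mapsto\sum_{i=1}^{12}|MA_i|^{\lambda}$ is constant on $\Gamma\setminus\{A_1,\dots,A_{12}\}$, then $\lambda\in\{0,2,4,6,8,10\}$.
   Context: $|MA|$ denotes Euclidean distance. *)

(* Defs.v *)
From Stdlib Require Import Reals Lra.
Open Scope R_scope.

Definition point := (R * R * R)%type.

Definition mkpt (x y z : R) : point := (x, y, z).

Definition dist3 (P Q : point) : R :=
  let '(x1, y1, z1) := P in
  let '(x2, y2, z2) := Q in
  sqrt ((x1 - x2)^2 + (y1 - y2)^2 + (z1 - z2)^2).

Definition origin : point := (0, 0, 0).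

Definition phi : R := (1 + sqrt 5) / 2.

(* The 12 vertices of the standard regular icosahedron centred at the origin:
   cyclic permutations of (0, +-1, +-phi). Indices 0..11. *)
Definition std_vertex (j : nat) : point :=
  match j with
  | 0 => mkpt 0 1 phi
  | 1 => mkpt 0 1 (- phi)
  | 2 => mkpt 0 (-1) phi
  | 3 => mkpt 0 (-1) (- phi)
  | 4 => mkpt 1 phi 0
  | 5 => mkpt 1 (- phi) 0
  | 6 => mkpt (-1) phi 0
  | 7 => mkpt (-1) (- phi) 0
  | 8 => mkpt phi 0 1
  | 9 => mkpt phi 0 (-1)
  | 10 => mkpt (- phi) 0 1
  | _ => mkpt (- phi) 0 (-1)
  end.

Definition similarity (T : point -> point) (c : R) : Prop :=
  0 < c /\ forall P Q, dist3 (T P) (T Q) = c * dist3 P Q.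

(* A (indices 0..11) lists the 12 distinct vertices of a regular icosahedron
   with centre O: it is the image of the standard icosahedron under a
   similarity sending the origin (its centre) to O. *)
Definition regular_icosahedron (A : nat -> point) (O : point) : Prop :=
  exists (T : point -> point) (c : R),
    similarity T c /\ T origin = O /\
    (forall i, (i < 12)%nat -> exists j, (j < 12)%nat /\ A i = T (std_vertex j)) /\
    (forall i k, (i < 12)%nat -> (k < 12)%nat -> A i = A k -> i = k).

(* M |-> sum_{i=1}^{12} |M A_i|^lambda  (indices shifted to 0..11) *)
Definition vertex_power_sum (A : nat -> point) (lam : R) (M : point) : R :=
  sum_f_R0 (fun i => Rpower (dist3 M (A i)) lam) 11.

(* Main.v *)
Require Import Defs.
From Stdlib Require Import Reals Lra Lia List Permutation ClassicalEpsilon Nsatz.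
From Coquelicot Require Import Coquelicot.
Open Scope R_scope.
Definition Fs (c a : nat -> R) (n : nat) (x : R) : R :=
  sum_f_R0 (fun i => c i * exp (a i * x)) n.

Fixpoint scn (c : nat -> R) (n : nat) : nat :=
  match n with
  | O => O
  | S m => (scn c m + if Rlt_dec (c m * c (S m)) 0 then 1 else 0)%nat
  end.

Lemma scn_pos c n : (0 < scn c n)%nat -> exists k, (k < n)%nat /\ c k * c (S k) < 0.
Proof.
  induction n as [|n IH]; simpl; [lia|].
  destruct (Rlt_dec (c n * c (S n)) 0) as [h|h]; intros H.
  - exists n; split; [lia|exact h].
  - destruct IH as [k [hk1 hk2]]; [lia|]. exists k; split; [lia|exact hk2].
Qed.

Lemma scn_eq c c' n : (forall i, (i < n)%nat -> (c i * c (S i) < 0 <-> c' i * c' (S i) < 0)) ->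
  scn c n = scn c' n.
Proof.
  induction n as [|n IH]; simpl; intros H; [reflexivity|].
  rewrite IH by (intros; apply H; lia).
  destruct (Rlt_dec (c n * c (S n)) 0) as [h|h];
  destruct (Rlt_dec (c' n * c' (S n)) 0) as [h'|h']; try reflexivity;
  exfalso; [apply h'|apply h]; apply (H n); auto; lia.
Qed.

Lemma scn_flip c c' n k : (k < n)%nat -> c k * c (S k) < 0 -> ~ (c' k * c' (S k) < 0) ->
  (forall i, (i < n)%nat -> i <> k -> (c i * c (S i) < 0 <-> c' i * c' (S i) < 0)) ->
  scn c n = S (scn c' n).
Proof.
  induction n as [|n IH]; intros Hk H1 H2 H; [lia|]. simpl.
  destruct (Nat.eq_dec k n) as [->|hne].
  - rewrite (scn_eq c c' n) by (intros; apply H; lia).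
    destruct (Rlt_dec (c n * c (S n)) 0); [|contradiction].
    destruct (Rlt_dec (c' n * c' (S n)) 0); [contradiction|]. lia.
  - rewrite IH by (auto; try lia; intros; apply H; lia).
    destruct (Rlt_dec (c n * c (S n)) 0) as [h|h];
    destruct (Rlt_dec (c' n * c' (S n)) 0) as [h'|h']; try lia;
    exfalso; [apply h'|apply h]; apply (H n); auto; lia.
Qed.

Lemma scn0_same c n : scn c n = 0%nat -> (forall i, (i <= n)%nat -> c i <> 0) ->
  forall i, (i <= n)%nat -> 0 < c 0%nat * c i.
Proof.
  induction n as [|n IH]; intros H0 Hnz i Hi.
  - assert (i = 0%nat) by lia; subst. specialize (Hnz 0%nat (le_n _)).
    nra.
  - simpl in H0. destruct (Rlt_dec (c n * c (S n)) 0) as [h|h]; [lia|].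
    assert (Hs : scn c n = 0%nat) by lia.
    destruct (Nat.eq_dec i (S n)) as [->|hne].
    + assert (A1 := IH Hs (fun j hj => Hnz j ltac:(lia)) n (le_n _)).
      assert (A2 := Hnz (S n) (le_n _)). assert (A3 := Hnz n ltac:(lia)).
      assert (0 < c n * c (S n)) by (apply Rnot_le_lt; intro; apply A2;
        destruct (Rle_lt_or_eq_dec _ _ (Rnot_lt_le _ _ h)); [|nra];
        exfalso; nra).
      assert (0 < (c 0%nat * c n) * (c n * c (S n))) by (apply Rmult_lt_0_compat; auto).
      assert (0 < c n * c n) by nra. nra.
    + apply IH; [exact Hs| intros j hj; apply Hnz; lia | lia].
Qed.

Lemma sum_pos (f : nat -> R) n : (forall i, (i <= n)%nat -> 0 < f i) -> 0 < sum_f_R0 f n.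
Proof.
  induction n as [|n IH]; simpl; intros H; [apply H; lia|].
  assert (0 < sum_f_R0 f n) by (apply IH; intros; apply H; lia).
  assert (0 < f (S n)) by (apply H; lia). lra.
Qed.

Lemma Fs_scal k c a n x : k * Fs c a n x = Fs (fun i => k * c i) a n x.
Proof.
  unfold Fs; induction n as [|n IH]; simpl; [ring|]. rewrite <- IH; ring.
Qed.

Lemma Fs_base c a n : scn c n = 0%nat -> (forall i, (i <= n)%nat -> c i <> 0) ->
  forall x, Fs c a n x <> 0.
Proof.
  intros H0 Hnz x Hf.
  assert (0 < c 0%nat * Fs c a n x).
  { rewrite Fs_scal. unfold Fs. apply sum_pos. intros i Hi.
    cbv beta. apply Rmult_lt_0_compat; [|apply exp_pos].
    apply (scn0_same c n); auto. }
  rewrite Hf in H. lra.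
Qed.

Lemma Fs_deriv c a n x : derivable_pt_lim (Fs c a n) x (Fs (fun i => c i * a i) a n x).
Proof.
  apply is_derive_Reals. unfold Fs. induction n as [|n IH]; simpl.
  - auto_derive; auto. ring.
  - apply (is_derive_plus (fun x => sum_f_R0 (fun i => c i * exp (a i * x)) n)
        (fun x => c (S n) * exp (a (S n) * x))); auto.
    auto_derive; auto. ring.
Qed.

Lemma Fs_shift c a n b x : Fs c a n x = exp (b * x) * Fs c (fun i => a i - b) n x.
Proof.
  unfold Fs; induction n as [|n IH]; simpl.
  - replace (a 0%nat * x) with (b * x + (a 0%nat - b) * x) by ring. rewrite exp_plus. ring.
  - rewrite IH, Rmult_plus_distr_l. f_equal.
    replace (a (S n) * x) with (b * x + (a (S n) - b) * x) by ring. rewrite exp_plus. ring.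
Qed.

Theorem descartes V : forall n c a,
  (forall i j, (i < j)%nat -> (j <= n)%nat -> a i < a j) ->
  (forall i, (i <= n)%nat -> c i <> 0) -> scn c n = V ->
  forall m z, (forall j, (j < m)%nat -> z j < z (S j)) ->
  (forall j, (j <= m)%nat -> Fs c a n (z j) = 0) -> (m < V)%nat.
Proof.
  induction V as [|V IH]; intros n c a Ha Hc HV m z Hz Hzero.
  - exfalso. apply (Fs_base c a n HV Hc (z 0%nat)). apply Hzero. lia.
  - destruct (scn_pos c n) as [k [Hk Hck]]; [lia|].
    set (b := (a k + a (S k)) / 2).
    assert (Hak : a k < a (S k)) by (apply Ha; lia).
    assert (Hlo : forall i, (i <= k)%nat -> a i - b < 0).
    { intros i hi. destruct (Nat.eq_dec i k) as [->|]; unfold b; [lra|].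
      assert (a i < a k) by (apply Ha; lia). lra. }
    assert (Hhi : forall i, (S k <= i)%nat -> (i <= n)%nat -> 0 < a i - b).
    { intros i hi hn. destruct (Nat.eq_dec i (S k)) as [->|]; unfold b; [lra|].
      assert (a (S k) < a i) by (apply Ha; lia). lra. }
    set (a' := fun i => a i - b). set (c' := fun i => c i * a' i).
    assert (Hc' : forall i, (i <= n)%nat -> c' i <> 0).
    { intros i hi. unfold c', a'. apply Rmult_integral_contrapositive; split; [apply Hc; auto|].
      destruct (Compare_dec.le_lt_dec i k). specialize (Hlo i l); lra. specialize (Hhi i l hi); lra. }
    assert (Hs : scn c n = S (scn c' n)).
    { apply (scn_flip c c' n k Hk Hck).
      - unfold c', a'. specialize (Hlo k (le_n _)). specialize (Hhi (S k) (le_n _) Hk).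
        intro h. assert (c k * c (S k) * ((a k - b) * (a (S k) - b)) < 0) by nra.
        assert ((a k - b) * (a (S k) - b) < 0) by nra. nra.
      - intros i hi hik. unfold c', a'.
        assert (Hp : 0 < (a i - b) * (a (S i) - b)).
        { destruct (Compare_dec.le_lt_dec (S i) k).
          - pose proof (Hlo i ltac:(lia)). pose proof (Hlo (S i) l). nra.
          - pose proof (Hhi i ltac:(lia) ltac:(lia)). pose proof (Hhi (S i) ltac:(lia) ltac:(lia)). nra. }
        replace (c i * (a i - b) * (c (S i) * (a (S i) - b))) with (c i * c (S i) * ((a i - b) * (a (S i) - b))) by ring.
        split; intro h; nra. }
    destruct m as [|m']; [lia|].
    assert (Hz' : forall j, (j <= S m')%nat -> Fs c a' n (z j) = 0).
    { intros j hj. specialize (Hzero j hj). rewrite (Fs_shift c a n b) in Hzero.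
      assert (exp (b * z j) > 0) by apply exp_pos. unfold a'. nra. }
    assert (Hw : forall j, {w | (j < S m')%nat -> z j < w < z (S j) /\ Fs c' a' n w = 0}).
    { intro j. apply constructive_indefinite_description.
      destruct (Compare_dec.lt_dec j (S m')) as [hj|hj]; [|exists 0; intro; contradiction].
      destruct (MVT_cor2 (Fs c a' n) (Fs (fun i => c i * a' i) a' n) (z j) (z (S j)))
        as [w [hw1 hw2]]; [apply Hz; auto| intros; apply Fs_deriv |].
      exists w. intros _. split; [auto|].
      rewrite (Hz' j), (Hz' (S j)) in hw1 by lia.
      assert (z j < z (S j)) by (apply Hz; auto).
      fold c' in hw1. nra. }
    set (w := fun j => proj1_sig (Hw j)).
    assert (Hwp : forall j, (j < S m')%nat -> z j < w j < z (S j) /\ Fs c' a' n (w j) = 0)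
      by (intros j hj; unfold w; destruct (Hw j) as [x hx]; simpl; auto).
    assert (m' < V)%nat.
    { apply (IH n c' a' ltac:(intros i j hij hj; unfold a'; assert (a i < a j) by (apply Ha; auto); lra) Hc' ltac:(lia) m' w).
      - intros j hj. destruct (Hwp j ltac:(lia)) as [[h1 h2] _].
        destruct (Hwp (S j) ltac:(lia)) as [[h3 h4] _]. lra.
      - intros j hj. apply Hwp. lia. }
    lia.
Qed.

Lemma dist3_refl P : dist3 P P = 0.
Proof. destruct P as [[x y] z]. unfold dist3. replace ((x - x) ^ 2 + (y - y) ^ 2 + (z - z) ^ 2) with 0 by ring. apply sqrt_0. Qed.

Lemma fold_app_one l x : fold_right Rplus 0 (l ++ x :: nil) = fold_right Rplus 0 l + x.
Proof. induction l; simpl; [ring|rewrite IHl; ring]. Qed.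

Lemma sum_list (h : nat -> R) n : sum_f_R0 h n = fold_right Rplus 0 (map h (seq 0 (S n))).
Proof.
  induction n as [|n IH]; [simpl; ring|].
  rewrite (seq_S (S n) 0), map_app. change (map h ((0 + S n)%nat :: nil)) with (h (S n) :: nil).
  rewrite fold_app_one, <- IH. reflexivity.
Qed.

Lemma fold_perm l l' : Permutation l l' -> fold_right Rplus 0 l = fold_right Rplus 0 l'.
Proof. induction 1; simpl; try lra. Qed.

Lemma sum_perm (h : nat -> R) (s : nat -> nat) n :
  (forall i, (i <= n)%nat -> (s i <= n)%nat) ->
  (forall i k, (i <= n)%nat -> (k <= n)%nat -> s i = s k -> i = k) ->
  sum_f_R0 (fun i => h (s i)) n = sum_f_R0 h n.
Proof.
  intros H1 H2. rewrite !sum_list.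
  rewrite <- (map_map s h).
  apply fold_perm. apply Permutation_map.
  apply Permutation_map_same_l.
  - apply FinFun.Injective_map_NoDup_in; [|apply seq_NoDup].
    intros x y hx hy. apply in_seq in hx, hy. apply H2; lia.
  - intros x hx. apply in_map_iff in hx. destruct hx as [y [<- hy]].
    apply in_seq in hy. apply in_seq. specialize (H1 y ltac:(lia)). lia.
Qed.

Definition W (c lam : R) (P : point) : R :=
  sum_f_R0 (fun j => Rpower (c * dist3 P (std_vertex j)) lam) 11.

Lemma reduction A O : regular_icosahedron A O ->
  exists (T : point -> point) (c : R), 0 < c /\ (forall P Q, dist3 (T P) (T Q) = c * dist3 P Q) /\
   T origin = O /\
   forall P lam, (forall j, (j < 12)%nat -> 0 < dist3 P (std_vertex j)) ->
     (forall i, (i < 12)%nat -> T P <> A i) /\ vertex_power_sum A lam (T P) = W c lam P.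
Proof.
  intros [T [c [[Hc Hs] [HO [Hv Hinj]]]]].
  exists T, c. split; [auto|split; [auto|split; [auto|]]].
  assert (Hw : forall i, {j | (i < 12)%nat -> (j < 12)%nat /\ A i = T (std_vertex j)}).
  { intro i. apply constructive_indefinite_description.
    destruct (Compare_dec.lt_dec i 12) as [h|h]; [|exists 0%nat; intro; contradiction].
    destruct (Hv i h) as [j hj]. exists j. auto. }
  set (s := fun i => proj1_sig (Hw i)).
  assert (Hsp : forall i, (i < 12)%nat -> (s i < 12)%nat /\ A i = T (std_vertex (s i)))
    by (intros i hi; unfold s; destruct (Hw i) as [x hx]; simpl; auto).
  intros P lam HP. split.
  - intros i hi E. destruct (Hsp i hi) as [h1 h2]. rewrite h2 in E.
    assert (dist3 (T P) (T (std_vertex (s i))) = 0) by (rewrite E; apply dist3_refl).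
    rewrite Hs in H. specialize (HP (s i) h1). nra.
  - unfold vertex_power_sum, W.
    rewrite (sum_eq _ (fun i => (fun j => Rpower (c * dist3 P (std_vertex j)) lam) (s i))).
    + apply (sum_perm (fun j => Rpower (c * dist3 P (std_vertex j)) lam) s 11).
      * intros i hi. destruct (Hsp i ltac:(lia)). lia.
      * intros i k hi hk E. apply Hinj; try lia.
        destruct (Hsp i ltac:(lia)) as [_ e1]. destruct (Hsp k ltac:(lia)) as [_ e2].
        rewrite e1, e2, E. reflexivity.
    + intros i hi. destruct (Hsp i ltac:(lia)) as [_ e1]. rewrite e1, Hs. reflexivity.
Qed.

Lemma sqrt5_bounds : 2 < sqrt 5 < 3.
Proof.
  split.
  - replace 2 with (sqrt (2^2)) by (apply sqrt_pow2; lra). apply sqrt_lt_1; lra.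
  - replace 3 with (sqrt (3^2)) by (apply sqrt_pow2; lra). apply sqrt_lt_1; lra.
Qed.

Lemma phi_sq : phi * phi = phi + 1.
Proof.
  unfold phi. assert (H := sqrt_sqrt 5 ltac:(lra)). nra.
Qed.

Lemma phi_bounds : 3/2 < phi < 2.
Proof. unfold phi. pose proof sqrt5_bounds. lra. Qed.

Definition Qc := phi + 2.

Definition uu (t w : R) (k : nat) : R :=
  match k with
  | 0 => t * Qc | 1 => w * phi | 2 => w | 3 => t * phi | 4 => 0
  | 5 => - (t * phi) | 6 => - w | 7 => - (w * phi) | _ => - (t * Qc)
  end.

Definition XX (t w : R) (k : nat) : R := t * t * Qc + Qc - 2 * uu t w k.

Definition cc (k : nat) : R :=
  match k with
  | 0 => 1 | 1 => -2 | 2 => -2 | 3 => 5 | 4 => -4 | 5 => 5 | 6 => -2 | 7 => -2 | _ => 1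
  end.

Definition g1 (j : nat) : nat :=
  match j with
  | 0 => 0 | 1 => 5 | 2 => 3 | 3 => 8 | 4 => 3 | 5 => 5 | 6 => 3 | 7 => 5
  | 8 => 3 | 9 => 5 | 10 => 3 | _ => 5
  end.

Definition g2 (j : nat) : nat :=
  match j with
  | 0 => 1 | 1 => 7 | 2 => 1 | 3 => 7 | 4 => 4 | 5 => 4 | 6 => 4 | 7 => 4
  | 8 => 2 | 9 => 6 | 10 => 2 | _ => 6
  end.

Lemma dist_P1 t w j : w * w = Qc * (t * t) ->
  dist3 (mkpt 0 t (t * phi)) (std_vertex j) = sqrt (XX t w (g1 j)).
Proof.
  intros Hw. pose proof phi_sq as Hp.
  unfold dist3, XX, uu, Qc, mkpt in *.
  destruct j as [|[|[|[|[|[|[|[|[|[|[|j]]]]]]]]]]]; simpl; f_equal; nsatz.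
Qed.

Lemma dist_P2 t w j : w * w = Qc * (t * t) ->
  dist3 (mkpt 0 0 w) (std_vertex j) = sqrt (XX t w (g2 j)).
Proof.
  intros Hw. pose proof phi_sq as Hp.
  unfold dist3, XX, uu, Qc, mkpt in *.
  destruct j as [|[|[|[|[|[|[|[|[|[|[|j]]]]]]]]]]]; simpl; f_equal; nsatz.
Qed.

Lemma ident0 t w : w * w = Qc * (t * t) -> sum_f_R0 (fun k => cc k * XX t w k ^ 0) 8 = 0.
Proof. intros Hw. pose proof phi_sq as Hp. unfold XX, uu, cc, Qc in *. simpl. nsatz. Qed.

Lemma ident1 t w : w * w = Qc * (t * t) -> sum_f_R0 (fun k => cc k * XX t w k ^ 1) 8 = 0.
Proof. intros Hw. pose proof phi_sq as Hp. unfold XX, uu, cc, Qc in *. simpl. nsatz. Qed.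

Lemma ident2 t w : w * w = Qc * (t * t) -> sum_f_R0 (fun k => cc k * XX t w k ^ 2) 8 = 0.
Proof. intros Hw. pose proof phi_sq as Hp. unfold XX, uu, cc, Qc in *. simpl. nsatz. Qed.

Lemma ident3 t w : w * w = Qc * (t * t) -> sum_f_R0 (fun k => cc k * XX t w k ^ 3) 8 = 0.
Proof. intros Hw. pose proof phi_sq as Hp. unfold XX, uu, cc, Qc in *. simpl. nsatz. Qed.

Lemma ident4 t w : w * w = Qc * (t * t) -> sum_f_R0 (fun k => cc k * XX t w k ^ 4) 8 = 0.
Proof. intros Hw. pose proof phi_sq as Hp. unfold XX, uu, cc, Qc in *. simpl. nsatz. Qed.

Lemma ident5 t w : w * w = Qc * (t * t) -> sum_f_R0 (fun k => cc k * XX t w k ^ 5) 8 = 0.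
Proof. intros Hw. pose proof phi_sq as Hp. unfold XX, uu, cc, Qc in *. simpl. nsatz. Qed.

Lemma ident t w j : w * w = Qc * (t * t) -> (j <= 5)%nat ->
  sum_f_R0 (fun k => cc k * XX t w k ^ j) 8 = 0.
Proof.
  intros Hw Hj.
  destruct j as [|[|[|[|[|[|j]]]]]]; try lia;
  [apply ident0|apply ident1|apply ident2|apply ident3|apply ident4|apply ident5]; auto.
Qed.

Section Geo.
Variables t w : R.
Hypothesis Ht : 0 < t.
Hypothesis Hw0 : 0 < w.
Hypothesis Hw : w * w = Qc * (t * t).

Lemma X_chain : forall k, (k < 8)%nat -> XX t w k < XX t w (S k).
Proof.
  pose proof phi_sq. pose proof phi_bounds.
  assert (A1 : w * phi < t * Qc).
  { unfold Qc in *. assert (E1 : (w*phi)*(w*phi) = (phi+2)*(t*t)*(phi+1)) by (replace ((w*phi)*(w*phi)) with ((w*w)*(phi*phi)) by ring; rewrite Hw, H; ring).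
    assert (t*t > 0) by nra.
    assert (E2 : (t*(phi+2))*(t*(phi+2)) - (w*phi)*(w*phi) = (t*t)*(phi+2)) by (rewrite E1; ring).
    assert (0 < w * phi) by nra. assert (0 < t*(phi+2)) by nra.
    destruct (Rlt_or_le (w*phi) (t*(phi+2))) as [h|h]; auto.
    assert ((t*(phi+2))*(t*(phi+2)) <= (w*phi)*(w*phi)) by (apply Rmult_le_compat; lra). nra. }
  assert (A2 : t * phi < w).
  { unfold Qc in *. assert (t*t > 0) by nra.
    assert (E2 : w * w - (t*phi)*(t*phi) = t * t) by (rewrite Hw; replace ((t*phi)*(t*phi)) with ((t*t)*(phi*phi)) by ring; rewrite H; ring).
    assert (0 < t * phi) by nra.
    destruct (Rlt_or_le (t*phi) w) as [h|h]; auto.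
    assert (w*w <= (t*phi)*(t*phi)) by (apply Rmult_le_compat; lra). nra. }
  intros k hk. unfold XX, uu.
  assert (0 < t*phi) by nra. assert (w < w*phi) by nra.
  destruct k as [|[|[|[|[|[|[|[|k]]]]]]]]; try lia; simpl; try lra.
 
Qed.

Lemma X1_pos : 0 < XX t w 1.
Proof.
  pose proof phi_sq. pose proof phi_bounds. unfold XX, uu, Qc in *.
  simpl. assert (0 <= (w - phi) * (w - phi)) by apply Rle_0_sqr. nra.
Qed.

Lemma X_pos k : (1 <= k)%nat -> (k <= 8)%nat -> 0 < XX t w k.
Proof.
  intros h1 h2. induction k as [|k IH]; [lia|].
  destruct (Nat.eq_dec k 0) as [->|]; [apply X1_pos|].
  pose proof (X_chain k ltac:(lia)). specialize (IH ltac:(lia) ltac:(lia)). lra.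
Qed.

Lemma X0_val : XX t w 0 = Qc * (t - 1) * (t - 1).
Proof. unfold XX, uu. ring. Qed.

End Geo.

Definition aa (c t w : R) (k : nat) : R := ln (c * sqrt (XX t w k)).

Lemma Rpower_exp y l : Rpower y l = exp (ln y * l).
Proof. unfold Rpower. rewrite Rmult_comm. reflexivity. Qed.

Lemma W_P1 c lam t w : w * w = Qc * (t * t) ->
  W c lam (mkpt 0 t (t * phi)) = sum_f_R0 (fun j => exp (ln (c * sqrt (XX t w (g1 j)))  * lam)) 11.
Proof.
  intros Hw. unfold W. apply sum_eq. intros j hj. rewrite Rpower_exp, (dist_P1 t w j Hw). reflexivity.
Qed.

Lemma W_P2 c lam t w : w * w = Qc * (t * t) ->
  W c lam (mkpt 0 0 w) = sum_f_R0 (fun j => exp (ln (c * sqrt (XX t w (g2 j)))  * lam)) 11.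
Proof.
  intros Hw. unfold W. apply sum_eq. intros j hj. rewrite Rpower_exp, (dist_P2 t w j Hw). reflexivity.
Qed.

Lemma expand c lam t w : w * w = Qc * (t * t) ->
  W c lam (mkpt 0 t (t * phi)) - W c lam (mkpt 0 0 w) = Fs cc (aa c t w) 8 lam.
Proof.
  intros Hw. rewrite (W_P1 c lam t w Hw), (W_P2 c lam t w Hw). unfold Fs, aa. simpl. ring.
Qed.

Lemma expand1 c lam w : w * w = Qc * (1 * 1) ->
  sum_f_R0 (fun j => Rpower (c * dist3 (mkpt 0 1 (1 * phi)) (std_vertex (S j))) lam) 10
    - W c lam (mkpt 0 0 w) = Fs (fun k => cc (S k)) (fun k => aa c 1 w (S k)) 7 lam.
Proof.
  intros Hw. rewrite (W_P2 c lam 1 w Hw).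
  rewrite (sum_eq _ (fun j => exp (ln (c * sqrt (XX 1 w (g1 (S j)))) * lam))).
  - unfold Fs, aa. simpl. ring.
  - intros j hj. rewrite Rpower_exp, (dist_P1 1 w (S j) Hw). reflexivity.
Qed.

Lemma pw c X j : 0 < c -> 0 < X -> exp (ln (c * sqrt X) * INR (2 * j)) = c ^ (2 * j) * X ^ j.
Proof.
  intros Hc HX. rewrite <- Rpower_exp, Rpower_pow.
  - rewrite Rpow_mult_distr, !pow_mult. rewrite pow2_sqrt by lra. reflexivity.
  - apply Rmult_lt_0_compat; auto. apply sqrt_lt_R0; auto.
Qed.

Lemma sum_scal (f : nat -> R) k n : sum_f_R0 (fun i => k * f i) n = k * sum_f_R0 f n.
Proof. induction n; simpl; [ring|rewrite IHn; ring]. Qed.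

Lemma zeros_gen c t w j : 0 < c -> w * w = Qc * (t * t) -> (forall k, (k <= 8)%nat -> 0 < XX t w k) ->
  (j <= 5)%nat -> Fs cc (aa c t w) 8 (INR (2 * j)) = 0.
Proof.
  intros Hc Hw HX Hj. unfold Fs, aa.
  rewrite (sum_eq _ (fun k => c ^ (2 * j) * (cc k * XX t w k ^ j))).
  - rewrite sum_scal, ident; auto. ring.
  - intros k hk. rewrite pw; auto. ring.
Qed.

Lemma zeros_one c w j : 0 < c -> w * w = Qc * (1 * 1) -> (forall k, (1 <= k)%nat -> (k <= 8)%nat -> 0 < XX 1 w k) ->
  (1 <= j)%nat -> (j <= 5)%nat -> Fs (fun k => cc (S k)) (fun k => aa c 1 w (S k)) 7 (INR (2 * j)) = 0.
Proof.
  intros Hc Hw HX Hj1 Hj. unfold Fs, aa.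
  rewrite (sum_eq _ (fun k => c ^ (2 * j) * (cc (S k) * XX 1 w (S k) ^ j))).
  - rewrite sum_scal.
    assert (E := ident 1 w j Hw Hj). rewrite decomp_sum in E by lia. simpl pred in E.
    replace (XX 1 w 0) with 0 in E by (unfold XX, uu; ring).
    rewrite pow_i in E by lia. rewrite Rmult_0_r, Rplus_0_l in E. rewrite E. ring.
  - intros k hk. rewrite pw; auto; [ring|]. apply HX; lia.
Qed.

Lemma incr_chain (f : nat -> R) n : (forall k, (k < n)%nat -> f k < f (S k)) ->
  forall i j, (i < j)%nat -> (j <= n)%nat -> f i < f j.
Proof.
  intros H i j hij hj. induction j as [|j IH]; [lia|].
  destruct (Nat.eq_dec i j) as [->|hne]; [apply H; lia|].
  pose proof (H j ltac:(lia)). specialize (IH ltac:(lia) ltac:(lia)). lra.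
Qed.

Ltac scn_compute :=
  repeat match goal with
  | |- context [Rlt_dec ?a ?b] => destruct (Rlt_dec a b); try (exfalso; lra)
  end; reflexivity.

Lemma scn_cc : scn cc 8 = 6%nat.
Proof. unfold cc; simpl scn. scn_compute. Qed.

Lemma scn_cc1 : scn (fun k => cc (S k)) 7 = 5%nat.
Proof. unfold cc; simpl scn. scn_compute. Qed.

Lemma seven (Z : R -> Prop) lam : Z lam -> Z 0 -> Z 2 -> Z 4 -> Z 6 -> Z 8 -> Z 10 ->
  lam <> 0 -> lam <> 2 -> lam <> 4 -> lam <> 6 -> lam <> 8 -> lam <> 10 ->
  exists z : nat -> R, (forall j, (j < 6)%nat -> z j < z (S j)) /\ (forall j, (j <= 6)%nat -> Z (z j)).
Proof.
  intros Zl Z0 Z2 Z4 Z6 Z8 Z10 n0 n2 n4 n6 n8 n10.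
  destruct (Rlt_or_le lam 0); [exists (fun j => nth j (lam::0::2::4::6::8::10::nil) 0)|].
  2: destruct (Rlt_or_le lam 2); [exists (fun j => nth j (0::lam::2::4::6::8::10::nil) 0)|].
  3: destruct (Rlt_or_le lam 4); [exists (fun j => nth j (0::2::lam::4::6::8::10::nil) 0)|].
  4: destruct (Rlt_or_le lam 6); [exists (fun j => nth j (0::2::4::lam::6::8::10::nil) 0)|].
  5: destruct (Rlt_or_le lam 8); [exists (fun j => nth j (0::2::4::6::lam::8::10::nil) 0)|].
  6: destruct (Rlt_or_le lam 10); [exists (fun j => nth j (0::2::4::6::8::lam::10::nil) 0)|].
  7: exists (fun j => nth j (0::2::4::6::8::10::lam::nil) 0).
  all: split; [intros j hj; do 6 (destruct j as [|j]; [simpl; lra|]); lia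
             | intros j hj; do 7 (destruct j as [|j]; [simpl; assumption|]); lia].
Qed.

Lemma six (Z : R -> Prop) lam : Z lam -> Z 2 -> Z 4 -> Z 6 -> Z 8 -> Z 10 -> 0 < lam ->
  lam <> 2 -> lam <> 4 -> lam <> 6 -> lam <> 8 -> lam <> 10 ->
  exists z : nat -> R, (forall j, (j < 5)%nat -> z j < z (S j)) /\ (forall j, (j <= 5)%nat -> Z (z j)).
Proof.
  intros Zl Z2 Z4 Z6 Z8 Z10 n0 n2 n4 n6 n8 n10.
  destruct (Rlt_or_le lam 2); [exists (fun j => nth j (lam::2::4::6::8::10::nil) 0)|].
  2: destruct (Rlt_or_le lam 4); [exists (fun j => nth j (2::lam::4::6::8::10::nil) 0)|].
  3: destruct (Rlt_or_le lam 6); [exists (fun j => nth j (2::4::lam::6::8::10::nil) 0)|].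
  4: destruct (Rlt_or_le lam 8); [exists (fun j => nth j (2::4::6::lam::8::10::nil) 0)|].
  5: destruct (Rlt_or_le lam 10); [exists (fun j => nth j (2::4::6::8::lam::10::nil) 0)|].
  6: exists (fun j => nth j (2::4::6::8::10::lam::nil) 0).
  all: split; [intros j hj; do 5 (destruct j as [|j]; [simpl; lra|]); lia
             | intros j hj; do 6 (destruct j as [|j]; [simpl; assumption|]); lia].
Qed.

Definition inset (lam : R) := lam = 0 \/ lam = 2 \/ lam = 4 \/ lam = 6 \/ lam = 8 \/ lam = 10.

Lemma aa_chain c t w n : 0 < c -> (forall k, (k <= n)%nat -> 0 < XX t w k) ->
  (forall k, (k < n)%nat -> XX t w k < XX t w (S k)) ->
  forall k, (k < n)%nat -> aa c t w k < aa c t w (S k).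
Proof.
  intros Hc HX Hch k hk. unfold aa. apply ln_increasing.
  - apply Rmult_lt_0_compat; auto. apply sqrt_lt_R0. apply HX; lia.
  - apply Rmult_lt_compat_l; auto. apply sqrt_lt_1; try (apply Rlt_le, HX; lia). apply Hch; auto.
Qed.

Lemma case_gen c t w lam : 0 < c -> 0 < t -> 0 < w -> w * w = Qc * (t * t) -> t <> 1 ->
  Fs cc (aa c t w) 8 lam = 0 -> inset lam.
Proof.
  intros Hc Ht Hw0 Hw Ht1 Hl. unfold inset.
  assert (HX : forall k, (k <= 8)%nat -> 0 < XX t w k).
  { intros k hk. destruct k as [|k].
    - rewrite X0_val. unfold Qc. pose proof phi_bounds.
      assert (0 < (t - 1) * (t - 1)) by (assert (t - 1 <> 0) by lra; nra). nra.
    - apply X_pos; auto; lia. }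
  destruct (Req_dec lam 0); [left; auto|]. destruct (Req_dec lam 2); [right; left; auto|].
  destruct (Req_dec lam 4); [do 2 right; left; auto|]. destruct (Req_dec lam 6); [do 3 right; left; auto|].
  destruct (Req_dec lam 8); [do 4 right; left; auto|]. destruct (Req_dec lam 10); [do 5 right; auto|].
  exfalso.
  assert (Zj : forall j, (j <= 5)%nat -> Fs cc (aa c t w) 8 (INR (2 * j)) = 0)
    by (intros; apply zeros_gen; auto).
  destruct (seven (fun x => Fs cc (aa c t w) 8 x = 0) lam) as [z [Hz1 Hz2]]; auto.
  - replace 0 with (INR (2 * 0)) by (simpl; ring). apply Zj; lia.
  - replace 2 with (INR (2 * 1)) by (simpl; ring). apply Zj; lia.
  - replace 4 with (INR (2 * 2)) by (simpl; ring). apply Zj; lia.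
  - replace 6 with (INR (2 * 3)) by (simpl; ring). apply Zj; lia.
  - replace 8 with (INR (2 * 4)) by (simpl; ring). apply Zj; lia.
  - replace 10 with (INR (2 * 5)) by (simpl; ring). apply Zj; lia.
  - assert (6 < 6)%nat; [|lia].
    refine (descartes 6 8 cc (aa c t w) _ _ scn_cc 6 z Hz1 Hz2).
    + apply incr_chain. apply aa_chain; auto. apply X_chain; auto.
    + intros i hi. unfold cc. destruct i as [|[|[|[|[|[|[|[|[|i]]]]]]]]]; lra.
Qed.

Lemma case_one c w lam : 0 < c -> 0 < w -> w * w = Qc * (1 * 1) -> 0 < lam ->
  Fs (fun k => cc (S k)) (fun k => aa c 1 w (S k)) 7 lam = 0 -> inset lam.
Proof.
  intros Hc Hw0 Hw Hl0 Hl. unfold inset.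
  assert (HX : forall k, (1 <= k)%nat -> (k <= 8)%nat -> 0 < XX 1 w k)
    by (intros; apply X_pos; auto; lra).
  destruct (Req_dec lam 2); [right; left; auto|].
  destruct (Req_dec lam 4); [do 2 right; left; auto|]. destruct (Req_dec lam 6); [do 3 right; left; auto|].
  destruct (Req_dec lam 8); [do 4 right; left; auto|]. destruct (Req_dec lam 10); [do 5 right; auto|].
  exfalso.
  assert (Zj : forall j, (1 <= j)%nat -> (j <= 5)%nat -> Fs (fun k => cc (S k)) (fun k => aa c 1 w (S k)) 7 (INR (2 * j)) = 0)
    by (intros; apply zeros_one; auto).
  destruct (six (fun x => Fs (fun k => cc (S k)) (fun k => aa c 1 w (S k)) 7 x = 0) lam) as [z [Hz1 Hz2]]; auto.
  - replace 2 with (INR (2 * 1)) by (simpl; ring). apply Zj; lia.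
  - replace 4 with (INR (2 * 2)) by (simpl; ring). apply Zj; lia.
  - replace 6 with (INR (2 * 3)) by (simpl; ring). apply Zj; lia.
  - replace 8 with (INR (2 * 4)) by (simpl; ring). apply Zj; lia.
  - replace 10 with (INR (2 * 5)) by (simpl; ring). apply Zj; lia.
  - assert (5 < 5)%nat; [|lia].
    refine (descartes 5 7 (fun k => cc (S k)) (fun k => aa c 1 w (S k)) _ _ scn_cc1 5 z Hz1 Hz2).
    + apply (incr_chain (fun k => aa c 1 w (S k))). intros k hk.
      unfold aa. apply ln_increasing.
      * apply Rmult_lt_0_compat; auto. apply sqrt_lt_R0. apply HX; lia.
      * apply Rmult_lt_compat_l; auto. apply sqrt_lt_1; try (apply Rlt_le, HX; lia). apply X_chain; auto; try lra; lia.
    + intros i hi. unfold cc. destruct i as [|[|[|[|[|[|[|[|i]]]]]]]]; lra.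
Qed.

Definition RQ := sqrt Qc.

Lemma RQ_facts : RQ * RQ = Qc /\ 1 < RQ < 2.
Proof.
  pose proof phi_bounds. unfold RQ, Qc.
  assert (E : sqrt (phi + 2) * sqrt (phi + 2) = phi + 2) by (apply sqrt_sqrt; lra).
  split; auto. assert (0 <= sqrt (phi + 2)) by apply sqrt_pos. nra.
Qed.

Definition Pe (e : R) : point := mkpt (RQ * sin e) (cos e) (phi * cos e).

Lemma Pe_origin e : dist3 (Pe e) origin = RQ.
Proof.
  destruct RQ_facts as [HR [HR1 HR2]]. pose proof phi_sq.
  unfold dist3, Pe, mkpt, origin.
  replace ((RQ * sin e - 0) ^ 2 + (cos e - 0) ^ 2 + (phi * cos e - 0) ^ 2) with (RQ ^ 2).
  - apply sqrt_pow2; lra.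
  - pose proof (sin2_cos2 e). unfold Rsqr in *. unfold Qc in HR. nra.
Qed.

Lemma Pe_nonvertex e : 0 < e < 1/2 -> forall j, (j < 12)%nat -> 0 < dist3 (Pe e) (std_vertex j).
Proof.
  intros He j hj. destruct RQ_facts as [HR [HR1 HR2]]. pose proof phi_bounds.
  assert (Hs : 0 < sin e) by (apply sin_gt_0; [lra| pose proof PI2_1; lra]).
  assert (Hs2 : sin e < e) by (apply sin_lt_x; lra).
  assert (Hx : 0 < RQ * sin e < 1) by (split; nra).
  unfold dist3, Pe, mkpt.
  destruct j as [|[|[|[|[|[|[|[|[|[|[|[|j]]]]]]]]]]]]; try lia; simpl; apply sqrt_lt_R0;
  match goal with |- 0 < (?a - ?b) * _ + ?r1 * _ + ?r2 * _ =>
    assert (a - b <> 0) by lra; assert (0 < (a - b) * (a - b)) by (apply Rsqr_pos_lt; auto);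
    assert (0 <= r1 * r1) by apply Rle_0_sqr; assert (0 <= r2 * r2) by apply Rle_0_sqr end; nra.
Qed.

Lemma term_cont c lam j : 0 < c -> (j <= 10)%nat ->
  continuity_pt (fun e => Rpower (c * dist3 (Pe e) (std_vertex (S j))) lam) 0.
Proof.
  intros Hc Hj. destruct RQ_facts as [HR [HR1 HR2]]. pose proof phi_bounds.
  apply derivable_continuous_pt, ex_derive_Reals_0.
  unfold dist3, Pe, mkpt.
  destruct j as [|[|[|[|[|[|[|[|[|[|[|j]]]]]]]]]]]; try lia; cbv beta iota delta [std_vertex mkpt];
  unfold Rpower; auto_derive; rewrite ?sin_0, ?cos_0; repeat split; try nra;
  apply Rmult_lt_0_compat; auto; apply sqrt_lt_R0; nra.
Qed.

Lemma sum_cont (f : nat -> R -> R) n : (forall j, (j <= n)%nat -> continuity_pt (f j) 0) ->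
  continuity_pt (fun e => sum_f_R0 (fun j => f j e) n) 0.
Proof.
  induction n as [|n IH]; intros H; simpl.
  - apply H; lia.
  - apply (continuity_pt_plus (fun e => sum_f_R0 (fun j => f j e) n) (f (S n))).
    + apply IH; intros; apply H; lia.
    + apply H; lia.
Qed.

Definition gg c lam e := sum_f_R0 (fun j => Rpower (c * dist3 (Pe e) (std_vertex (S j))) lam) 10.

Lemma gg_cont c lam : 0 < c -> continuity_pt (gg c lam) 0.
Proof.
  intros Hc. unfold gg.
  apply (sum_cont (fun j e => Rpower (c * dist3 (Pe e) (std_vertex (S j))) lam) 10).
  intros j hj. apply term_cont; auto.
Qed.

Definition qq e := (RQ * sin e - 0) ^ 2 + (cos e - 1) ^ 2 + (phi * cos e - phi) ^ 2.

Lemma qq_cont : continuity_pt qq 0.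
Proof.
  apply derivable_continuous_pt, ex_derive_Reals_0. unfold qq. auto_derive. auto.
Qed.

Lemma qq0 : qq 0 = 0.
Proof. unfold qq. rewrite sin_0, cos_0. ring. Qed.

Lemma d_eq e : dist3 (Pe e) (std_vertex 0) = sqrt (qq e).
Proof. reflexivity. Qed.

Lemma cont_ed f : continuity_pt f 0 -> forall eps, 0 < eps ->
  exists eta, 0 < eta /\ forall e, Rabs e < eta -> Rabs (f e - f 0) < eps.
Proof.
  intros H eps Heps. destruct (H eps Heps) as [alp [Ha Hf]]. exists alp. split; auto.
  intros e He. destruct (Req_dec e 0) as [->|hne].
  - rewrite Rminus_diag_eq by reflexivity. rewrite Rabs_R0. auto.
  - apply (Hf e). split.
    + unfold D_x, no_cond. split; auto.
    + simpl. unfold R_dist. rewrite Rminus_0_r. auto.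
Qed.

Lemma small_e delta eta : 0 < delta -> 0 < eta ->
  exists e, 0 < e < 1/2 /\ Rabs e < eta /\ dist3 (Pe e) (std_vertex 0) < delta.
Proof.
  intros Hd He.
  destruct (cont_ed qq qq_cont (delta * delta)) as [e2 [He2 Hq]]; [nra|].
  set (e := Rmin (Rmin eta e2) (1/2) / 2).
  assert (Hm1 : Rmin (Rmin eta e2) (1/2) <= Rmin eta e2) by apply Rmin_l.
  assert (Hm2 : Rmin (Rmin eta e2) (1/2) <= 1/2) by apply Rmin_r.
  assert (Hm3 : Rmin eta e2 <= eta) by apply Rmin_l.
  assert (Hm4 : Rmin eta e2 <= e2) by apply Rmin_r.
  assert (Hm5 : 0 < Rmin (Rmin eta e2) (1/2)) by (repeat apply Rmin_glb_lt; lra).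
  assert (Hpos : 0 < e) by (unfold e; lra).
  exists e. split; [unfold e; lra|]. rewrite Rabs_pos_eq by lra. split; [unfold e; lra|].
  rewrite d_eq. specialize (Hq e ltac:(rewrite Rabs_pos_eq by lra; unfold e; lra)).
  rewrite qq0, Rminus_0_r in Hq.
  assert (0 <= qq e) by (unfold qq; repeat apply Rplus_le_le_0_compat; apply pow2_ge_0).
  rewrite Rabs_pos_eq in Hq by lra.
  rewrite <- (sqrt_pow2 delta) by lra. apply sqrt_lt_1; [lra|apply pow2_ge_0|]. simpl. lra.
Qed.

Lemma W_split c lam e : W c lam (Pe e) = Rpower (c * dist3 (Pe e) (std_vertex 0)) lam + gg c lam e.
Proof. unfold W, gg. rewrite decomp_sum by lia. reflexivity. Qed.

Lemma vlim c lam K : 0 < c -> (forall e, 0 < e < 1/2 -> W c lam (Pe e) = K) ->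
  (0 < lam -> K = gg c lam 0) /\ (lam < 0 -> False).
Proof.
  intros Hc HK. split.
  - intros Hl.
    assert (Hall : forall eps, 0 < eps -> Rabs (K - gg c lam 0) < eps).
    { intros eps Heps.
      destruct (cont_ed (gg c lam) (gg_cont c lam Hc) (eps/2)) as [e1 [He1 Hg]]; [lra|].
      set (delta := exp (ln (eps/2) / lam) / c).
      assert (Hdel : 0 < delta) by (unfold delta; apply Rdiv_lt_0_compat; [apply exp_pos|auto]).
      destruct (small_e delta e1 Hdel He1) as [e [He [Hae Hde]]].
      rewrite <- (HK e He), W_split.
      set (d := dist3 (Pe e) (std_vertex 0)) in *.
      assert (Hd : 0 < d) by (apply Pe_nonvertex; auto; lia).
      assert (Hcd : c * d < exp (ln (eps/2) / lam)).
      { unfold delta in Hde. apply (Rmult_lt_compat_l c) in Hde; auto.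
        replace (c * (exp (ln (eps / 2) / lam) / c)) with (exp (ln (eps / 2) / lam)) in Hde by (field; lra). auto. }
      assert (Hln : ln (c * d) < ln (eps/2) / lam).
      { rewrite <- (ln_exp (ln (eps / 2) / lam)). apply ln_increasing; auto. apply Rmult_lt_0_compat; auto. }
      assert (Hln2 : lam * ln (c * d) < ln (eps/2)).
      { apply (Rmult_lt_compat_l lam) in Hln; auto. replace (lam * (ln (eps / 2) / lam)) with (ln (eps/2)) in Hln by (field; lra). auto. }
      assert (Hrp : Rpower (c * d) lam < eps / 2).
      { unfold Rpower. rewrite <- (exp_ln (eps/2)) by lra. apply exp_increasing. auto. }
      assert (Hrp0 : 0 < Rpower (c * d) lam) by (unfold Rpower; apply exp_pos).
      specialize (Hg e Hae).
      replace (Rpower (c * d) lam + gg c lam e - gg c lam 0) with (Rpower (c * d) lam + (gg c lam e - gg c lam 0)) by ring.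
      apply Rle_lt_trans with (Rabs (Rpower (c * d) lam) + Rabs (gg c lam e - gg c lam 0)); [apply Rabs_triang|].
      rewrite Rabs_pos_eq by lra. lra. }
    destruct (Req_dec K (gg c lam 0)) as [h|h]; auto.
    exfalso. assert (0 < Rabs (K - gg c lam 0)) by (apply Rabs_pos_lt; lra).
    specialize (Hall _ H). lra.
  - intros Hl.
    set (M := Rabs K + 1).
    assert (HM : 0 < M) by (unfold M; pose proof (Rabs_pos K); lra).
    set (delta := exp (ln M / lam) / c).
    assert (Hdel : 0 < delta) by (unfold delta; apply Rdiv_lt_0_compat; [apply exp_pos|auto]).
    destruct (small_e delta 1 Hdel ltac:(lra)) as [e [He [_ Hde]]].
    specialize (HK e He). rewrite W_split in HK.
    set (d := dist3 (Pe e) (std_vertex 0)) in *.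
    assert (Hd : 0 < d) by (apply Pe_nonvertex; auto; lia).
    assert (Hcd : c * d < exp (ln M / lam)).
    { unfold delta in Hde. apply (Rmult_lt_compat_l c) in Hde; auto.
      replace (c * (exp (ln M / lam) / c)) with (exp (ln M / lam)) in Hde by (field; lra). auto. }
    assert (Hln : ln (c * d) < ln M / lam).
    { rewrite <- (ln_exp (ln M / lam)). apply ln_increasing; auto. apply Rmult_lt_0_compat; auto. }
    assert (Hln2 : ln M < lam * ln (c * d)).
    { assert (lam * (ln M / lam) = ln M) by (field; lra).
      assert (lam * (ln M / lam) < lam * ln (c * d)) by (apply Rmult_lt_gt_compat_neg_l; auto). lra. }
    assert (Hrp : M < Rpower (c * d) lam).
    { unfold Rpower. rewrite <- (exp_ln M) at 1 by lra. apply exp_increasing. auto. }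
    assert (Hg : 0 <= gg c lam e).
    { unfold gg. apply cond_pos_sum. intro n. unfold Rpower. left; apply exp_pos. }
    pose proof (Rle_abs K). unfold M in Hrp. lra.
Qed.

Lemma dist_origin_sq P x : 0 <= x -> (let '(a, b, d) := P in a ^ 2 + b ^ 2 + d ^ 2) = x ^ 2 -> dist3 P origin = x.
Proof.
  intros Hx H. destruct P as [[a b] d]. unfold dist3, origin.
  rewrite !Rminus_0_r, H. apply sqrt_pow2; auto.
Qed.

Theorem proposition5p2 (A : nat -> point) (O : point) (r lam : R) :
  regular_icosahedron A O ->
  0 < r ->
  (exists K : R, forall M : point,
      dist3 M O = r ->
      (forall i, (i < 12)%nat -> M <> A i) ->
      vertex_power_sum A lam M = K) ->
  lam = 0 \/ lam = 2 \/ lam = 4 \/ lam = 6 \/ lam = 8 \/ lam = 10.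
Proof.
  intros Hico Hr [K HK].
  destruct (reduction A O Hico) as [T [c [Hc [Hs [HO Hred]]]]].
  set (w := r / c). assert (Hw0 : 0 < w) by (unfold w; apply Rdiv_lt_0_compat; auto).
  assert (HW : forall P, dist3 P origin = w -> (forall j, (j < 12)%nat -> 0 < dist3 P (std_vertex j)) ->
            W c lam P = K).
  { intros P HP Hpos. destruct (Hred P lam Hpos) as [Hne Heq]. rewrite <- Heq. apply HK; auto.
    rewrite <- HO, Hs, HP. unfold w. field. lra. }
  destruct RQ_facts as [HR [HR1 HR2]]. pose proof phi_sq as Hp. pose proof phi_bounds as Hpb.
  set (t := w / RQ). assert (Ht0 : 0 < t) by (unfold t; apply Rdiv_lt_0_compat; lra).
  assert (HtR : t * RQ = w) by (unfold t; field; lra).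
  assert (Hw : w * w = Qc * (t * t)) by (rewrite <- HtR, <- HR; ring).
  assert (HP2o : dist3 (mkpt 0 0 w) origin = w).
  { apply dist_origin_sq; [lra|]. simpl. ring. }
  destruct (Req_dec t 1) as [Ht1|Ht1].
  - (* sphere through the vertices *)
    assert (HwR : w = RQ) by (rewrite <- HtR, Ht1; ring).
    assert (Hw1 : w * w = Qc * (1 * 1)) by (rewrite Hw, Ht1; ring).
    assert (HP2 : W c lam (mkpt 0 0 w) = K).
    { apply HW; auto. intros j hj. rewrite (dist_P2 1 w j Hw1). apply sqrt_lt_R0.
      apply X_pos; auto; try lra; destruct j as [|[|[|[|[|[|[|[|[|[|[|[|j]]]]]]]]]]]]; simpl; lia. }
    destruct (Rtotal_order lam 0) as [Hl|[Hl|Hl]]; [| left; auto |].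
    + exfalso. apply (proj2 (vlim c lam K Hc (fun e He => HW (Pe e) ltac:(rewrite Pe_origin; auto)
                       (Pe_nonvertex e He)))). auto.
    + assert (HK0 := proj1 (vlim c lam K Hc (fun e He => HW (Pe e) ltac:(rewrite Pe_origin; auto)
                       (Pe_nonvertex e He))) Hl).
      assert (HPe0 : Pe 0 = mkpt 0 1 (1 * phi)) by (unfold Pe; rewrite sin_0, cos_0; f_equal; [f_equal|]; ring).
      unfold gg in HK0. rewrite HPe0 in HK0.
      apply (case_one c w lam); auto.
      rewrite <- expand1 by auto. rewrite <- HK0, HP2. ring.
  - assert (HX : forall k, (k <= 8)%nat -> 0 < XX t w k).
    { intros k hk. destruct k as [|k].
      - rewrite X0_val. unfold Qc.
        assert (0 < (t - 1) * (t - 1)) by (assert (t - 1 <> 0) by lra; nra). nra.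
      - apply X_pos; auto; lia. }
    assert (HP1 : W c lam (mkpt 0 t (t * phi)) = K).
    { apply HW.
      - apply dist_origin_sq; [lra|]. simpl. rewrite <- HtR. unfold Qc in HR. nra.
      - intros j hj. rewrite (dist_P1 t w j Hw). apply sqrt_lt_R0. apply HX.
        destruct j as [|[|[|[|[|[|[|[|[|[|[|[|j]]]]]]]]]]]]; simpl; lia. }
    assert (HP2 : W c lam (mkpt 0 0 w) = K).
    { apply HW; auto. intros j hj. rewrite (dist_P2 t w j Hw). apply sqrt_lt_R0. apply HX.
      destruct j as [|[|[|[|[|[|[|[|[|[|[|[|j]]]]]]]]]]]]; simpl; lia. }
    apply (case_gen c t w lam); auto.
    rewrite <- expand by auto. rewrite HP1, HP2. ring.
Qed.
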